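(* Let $F$ be a field and $V$ an infinite-dimensional vector space over $F$, viewed as a structure in the signature consisting of $+$, $-$, $0$ and, for each $\lambda\in F$, a unary function symbol for scalar multiplication by $\lambda$. Let $I$ be the set of finite-dimensional subspaces of $V$, ordered by inclusion, each viewed as a substructure. Then $\lim_I\mathrm{Th}(W^* )=\mathrm{Th}(V^* )$, where $W$ ranges over $I$.
   Context: For a structure $\mathcal{T}$ with universe $T$, $\mathrm{Th}(\mathcal{T}^* )$ is the set of sentences in the given signature expanded by a constant for each element of $T$ that are true in $\mathcal{T}$; these are regarded as subsets of the set of sentences with constants from $V$. For a family $\{\Delta_i\}_{i\in I}$ indexed by a directed set: $\limsup_I \Delta_i=\{\theta: \forall i\ \exists j\ge i\ [\theta\in\Delta_j]\}$, $\liminf_I \Delta_i=\{\theta: \exists i\ \forall j\ge i\ [\theta\in\Delta_j]\}$, and $\lim_I\Delta_i=\Delta$ means both equal $\Delta$. *)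

(* Defs.v *)
From HB Require Import structures.
From mathcomp Require Import all_boot all_order all_algebra.
Set Implicit Arguments. Unset Strict Implicit. Unset Printing Implicit Defensive.
Import Order.TTheory GRing.Theory Num.Theory.
Local Open Scope ring_scope.

Inductive term (F V : Type) : Type :=
| Tvar : nat -> term F V
| Tconst : V -> term F V
| Tzero : term F V
| Tadd : term F V -> term F V -> term F V
| Topp : term F V -> term F V
| Tscale : F -> term F V -> term F V.

Inductive formula (F V : Type) : Type :=
| Fequ : term F V -> term F V -> formula F V
| Ffalse : formula F V
| Fnot : formula F V -> formula F V
| Fand : formula F V -> formula F V -> formula F V
| For : formula F V -> formula F V -> formula F V
| Fimp : formula F V -> formula F V -> formula F V
| Fforall : nat -> formula F V -> formula F V
| Fexists : nat -> formula F V -> formula F V.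

Section Syntax.
Variables (F V : Type).

Fixpoint fv_term (t : term F V) : seq nat :=
  match t with
  | Tvar n => [:: n]
  | Tconst _ | Tzero => [::]
  | Tadd t u => fv_term t ++ fv_term u
  | Topp t => fv_term t
  | Tscale _ t => fv_term t
  end.

Fixpoint fv (f : formula F V) : seq nat :=
  match f with
  | Fequ t u => fv_term t ++ fv_term u
  | Ffalse => [::]
  | Fnot g => fv g
  | Fand g h | For g h | Fimp g h => fv g ++ fv h
  | Fforall n g | Fexists n g => [seq m <- fv g | m != n]
  end.

Definition sentence (f : formula F V) : Prop := fv f = [::].

Fixpoint consts_in_term (W : V -> Prop) (t : term F V) : Prop :=
  match t with
  | Tvar _ | Tzero => True
  | Tconst v => W v
  | Tadd t u => consts_in_term W t /\ consts_in_term W u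
  | Topp t => consts_in_term W t
  | Tscale _ t => consts_in_term W t
  end.

Fixpoint consts_in (W : V -> Prop) (f : formula F V) : Prop :=
  match f with
  | Fequ t u => consts_in_term W t /\ consts_in_term W u
  | Ffalse => True
  | Fnot g => consts_in W g
  | Fand g h | For g h | Fimp g h => consts_in W g /\ consts_in W h
  | Fforall _ g | Fexists _ g => consts_in W g
  end.
End Syntax.

Section Semantics.
Variables (F : fieldType) (V : lmodType F).

Fixpoint eval_term (e : nat -> V) (t : term F V) : V :=
  match t with
  | Tvar n => e n
  | Tconst v => v
  | Tzero => 0
  | Tadd t u => eval_term e t + eval_term e u
  | Topp t => - eval_term e t
  | Tscale a t => a *: eval_term e t
  end.

Definition upd (e : nat -> V) (n : nat) (x : V) : nat -> V :=
  fun m => if m == n then x else e m.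

(* Satisfaction in the substructure with universe W (a subspace of V):
   quantifiers range over the elements of W. *)
Fixpoint holds (W : V -> Prop) (e : nat -> V) (f : formula F V) : Prop :=
  match f with
  | Fequ t u => eval_term e t = eval_term e u
  | Ffalse => False
  | Fnot g => ~ holds W e g
  | Fand g h => holds W e g /\ holds W e h
  | For g h => holds W e g \/ holds W e h
  | Fimp g h => holds W e g -> holds W e h
  | Fforall n g => forall x, W x -> holds W (upd e n x) g
  | Fexists n g => exists x, W x /\ holds W (upd e n x) g
  end.

(* Th(W^* ): sentences with constants from W true in the substructure W,
   regarded as a set of sentences with constants from V. *)
Definition Th (W : V -> Prop) (f : formula F V) : Prop :=
  sentence f /\ consts_in W f /\ holds W (fun _ => 0) f.

Definition ThV : formula F V -> Prop := Th (fun _ => True).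

Definition span_of (s : seq V) (x : V) : Prop :=
  exists c : 'I_(size s) -> F, x = \sum_(i < size s) c i *: s`_i.

Definition fin_dim_subspace (W : V -> Prop) : Prop :=
  exists s : seq V, forall x, W x <-> span_of s x.

Definition infinite_dim : Prop := forall s : seq V, exists x, ~ span_of s x.

Definition FinSub := {W : V -> Prop | fin_dim_subspace W}.
Definition fs_le (W1 W2 : FinSub) : Prop :=
  forall x, proj1_sig W1 x -> proj1_sig W2 x.
End Semantics.

Definition limsup (I X : Type) (le : I -> I -> Prop) (D : I -> X -> Prop)
  (th : X) : Prop := forall i, exists j, le i j /\ D j th.
Definition liminf (I X : Type) (le : I -> I -> Prop) (D : I -> X -> Prop)
  (th : X) : Prop := exists i, forall j, le i j -> D j th.
Definition is_lim (I X : Type) (le : I -> I -> Prop) (D : I -> X -> Prop)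
  (L : X -> Prop) : Prop :=
  (forall th, limsup le D th <-> L th) /\ (forall th, liminf le D th <-> L th).

(* Main.v *)
Require Import Defs.
From mathcomp Require Import all_boot all_order all_algebra.
From Stdlib Require Import Classical.
Set Implicit Arguments. Unset Strict Implicit. Unset Printing Implicit Defensive.
Import Order.TTheory GRing.Theory Num.Theory.
Local Open Scope ring_scope.

Section Aux.
Variables (F : fieldType) (V : lmodType F).

Fixpoint spanl (s : seq V) (x : V) : Prop :=
  match s with
  | [::] => x = 0
  | a :: s' => exists c : F, spanl s' (x - c *: a)
  end.

Lemma spanl_comb s a x y : spanl s x -> spanl s y -> spanl s (a *: x + y).
Proof.
elim: s x y => [|v s IH] x y /=; first by move=> -> ->; rewrite scaler0 addr0.
move=> [c Hx] [d Hy]; exists (a * c + d).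
have -> : a *: x + y - (a * c + d) *: v = a *: (x - c *: v) + (y - d *: v).
  by rewrite scalerDl scalerBr scalerA opprD addrACA.
exact: IH.
Qed.

Lemma spanl0 s : spanl s 0.
Proof. by elim: s => [|v s IH] //=; exists 0; rewrite scale0r subr0. Qed.

Lemma spanlZ s a x : spanl s x -> spanl s (a *: x).
Proof. by move=> H; rewrite -[_ *: _]addr0; apply: spanl_comb => //; apply: spanl0. Qed.

Lemma spanlD s x y : spanl s x -> spanl s y -> spanl s (x + y).
Proof. by move=> H1 H2; rewrite -[x]scale1r; apply: spanl_comb. Qed.

Lemma spanlN s x : spanl s x -> spanl s (- x).
Proof. by move=> H; rewrite -scaleN1r; apply: spanlZ. Qed.

Lemma spanl_mem s x : x \in s -> spanl s x.
Proof.
elim: s => [|v s IH] //=; rewrite in_cons => /orP [/eqP ->|Hx].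
  by exists 1; rewrite scale1r subrr; apply: spanl0.
by exists 0; rewrite scale0r subr0; apply: IH.
Qed.

Lemma spanl_trans s t x : spanl s x -> (forall z, z \in s -> spanl t z) -> spanl t x.
Proof.
elim: s x => [|v s IH] x /=; first by move=> ->; move=> _; apply: spanl0.
move=> [c Hx] Hs.
have -> : x = c *: v + (x - c *: v) by rewrite addrC subrK.
apply: spanl_comb; first by apply: Hs; rewrite mem_head.
by apply: IH => // z Hz; apply: Hs; rewrite in_cons Hz orbT.
Qed.

Lemma spanl_sub s t x : {subset s <= t} -> spanl s x -> spanl t x.
Proof. by move=> Hst H; apply: (spanl_trans H) => z /Hst; apply: spanl_mem. Qed.

Lemma spanl_span_of s x : spanl s x -> span_of s x.
Proof.
elim: s x => [|v s IH] x /=.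
  by move=> ->; exists (fun _ => 0); rewrite big_ord0.
move=> [k /IH [d Hd]].
exists (fun i : 'I_(size s).+1 => if unlift ord0 i is Some j then d j else k).
rewrite big_ord_recl unlift_none /=.
have -> : x = k *: v + (x - k *: v) by rewrite addrC subrK.
congr (_ + _); rewrite Hd; apply: eq_bigr => i _; by rewrite liftK.
Qed.

Lemma span_of_spanl s x : span_of s x -> spanl s x.
Proof.
elim: s x => [|v s IH] x /=.
  by move=> [c ->]; rewrite big_ord0.
move=> [c ->]; exists (c ord0); rewrite big_ord_recl /= addrAC subrr add0r.
by apply: IH; exists (fun j => c (lift ord0 j)).
Qed.

Fixpoint indep_mod (S B : seq V) : Prop :=
  match B with
  | [::] => True
  | b :: B' => ~ spanl S b /\ indep_mod (b :: S) B'
  end.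

Lemma find_exch S b ys : ~ spanl S b -> spanl (ys ++ S) b ->
  exists y zs, size ys = (size zs).+1 /\ (forall z, z \in ys -> z \in y :: zs)
    /\ spanl (zs ++ b :: S) y.
Proof.
move=> Hb; elim: ys b Hb => [|y0 ys IH] b Hb /=; first by move=> H; case: Hb.
move=> [c Hc].
have [c0|cn0] := eqVneq c 0.
  subst c.
  move: Hc; rewrite scale0r subr0 => Hc.
  have [y [zs [Hs [Hm Hy]]]] := IH b Hb Hc.
  exists y, (y0 :: zs); split; first by rewrite Hs.
  split.
    move=> z; rewrite in_cons => /orP [/eqP ->|/Hm]; first by rewrite !in_cons eqxx orbT.
    by rewrite !in_cons => /orP [->|->]; rewrite ?orbT.
  by apply: (spanl_sub _ Hy) => z; rewrite /= !(in_cons, mem_cat) => /orP [->|/orP[->|->]]; rewrite ?orbT.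
exists y0, ys; split => //; split => //.
have -> : y0 = c^-1 *: (b - (b - c *: y0)).
  by rewrite opprB addrC subrK scalerA mulVf // scale1r.
apply: spanlZ; apply: spanlD.
  by apply: spanl_mem; rewrite mem_cat in_cons eqxx orbT.
apply: spanlN.
by apply: (spanl_sub _ Hc) => z; rewrite !mem_cat in_cons => /orP [->|->]; rewrite ?orbT.
Qed.

Lemma exch B S ys : indep_mod S B -> (forall b, b \in B -> spanl (ys ++ S) b) ->
  (size B <= size ys)%N.
Proof.
elim: B S ys => [|b B IH] S ys //= [Hb Hind] Hall.
have Hbs : spanl (ys ++ S) b by apply: Hall; rewrite mem_head.
have [y [zs [Hs [Hm Hy]]]] := find_exch Hb Hbs.
rewrite Hs ltnS; apply: (IH _ _ Hind) => b' Hb'.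
apply: (spanl_trans (Hall b' _)); first by rewrite in_cons Hb' orbT.
move=> z; rewrite mem_cat => /orP [/Hm|Hz].
  rewrite in_cons => /orP [/eqP ->//|Hz]; by apply: spanl_mem; rewrite mem_cat Hz.
by apply: spanl_mem; rewrite mem_cat in_cons Hz !orbT.
Qed.

Lemma room B S ys (W : V -> Prop) : indep_mod S B -> (forall b, b \in B -> W b) ->
  (size ys < size B)%N -> exists x, W x /\ ~ spanl (ys ++ S) x.
Proof.
move=> Hi HB Hsz; apply: NNPP => Hno.
have : (size B <= size ys)%N.
  apply: (exch Hi) => b Hb; apply: NNPP => Hn; apply: Hno; exists b; split => //.
  exact: HB.
by rewrite leqNgt Hsz.
Qed.

Lemma mk_indep : infinite_dim V -> forall n S, exists B, size B = n /\ indep_mod S B.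
Proof.
move=> Hinf; elim => [|n IH] S; first by exists [::].
have [x Hx] := Hinf S.
have [B [HB Hi]] := IH (x :: S).
exists (x :: B); split; first by rewrite /= HB.
split => //; move=> /spanl_span_of; exact: Hx.
Qed.

Implicit Types (t : term F V) (e : nat -> V).

Fixpoint coef n t : F :=
  match t with
  | Tvar m => if m == n then 1 else 0
  | Tconst _ | Tzero => 0
  | Tadd t u => coef n t + coef n u
  | Topp t => - coef n t
  | Tscale a t => a * coef n t
  end.

Fixpoint sub0 n t : term F V :=
  match t with
  | Tvar m => if m == n then Tzero F V else Tvar F V m
  | Tconst v => Tconst F v
  | Tzero => Tzero F V
  | Tadd t u => Tadd (sub0 n t) (sub0 n u)
  | Topp t => Topp (sub0 n t)
  | Tscale a t => Tscale a (sub0 n t)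
  end.

Lemma eval_decomp e n x t :
  eval_term (upd e n x) t = coef n t *: x + eval_term e (sub0 n t).
Proof.
elim: t => [m|v||t IHt u IHu|t IHt|a t IHt] /=.
- by rewrite /upd; case: (m == n) => /=; rewrite ?scale1r ?addr0 ?scale0r ?add0r.
- by rewrite scale0r add0r.
- by rewrite scale0r addr0.
- by rewrite IHt IHu scalerDl addrACA.
- by rewrite IHt opprD scaleNr.
- by rewrite IHt scalerDr scalerA.
Qed.

Lemma fv_sub0 n t m : m \in fv_term (sub0 n t) -> (m \in fv_term t) && (m != n).
Proof.
elim: t => [k|v||t IHt u IHu|t IHt|a t IHt] //=.
- by case: eqP => [_|/eqP Hk] //=; rewrite !in_cons orbF => /eqP ->; rewrite eqxx.
- by rewrite !mem_cat => /orP [/IHt|/IHu] /andP [-> ->]; rewrite ?orbT.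
Qed.

Lemma consts_sub0 (P : V -> Prop) n t : consts_in_term P t -> consts_in_term P (sub0 n t).
Proof.
elim: t => [k|v||t IHt u IHu|t IHt|a t IHt] //=.
- by case: (k == n).
- by move=> [/IHt ? /IHu ?].
Qed.

Lemma consts_in_term_mono (P Q : V -> Prop) t :
  (forall v, P v -> Q v) -> consts_in_term P t -> consts_in_term Q t.
Proof.
move=> H; elim: t => [k|v||t IHt u IHu|t IHt|a t IHt] //=; try exact: H.
by move=> [/IHt ? /IHu ?].
Qed.

Lemma consts_in_mono (P Q : V -> Prop) (f : formula F V) :
  (forall v, P v -> Q v) -> consts_in P f -> consts_in Q f.
Proof.
move=> H; elim: f => [t u| |g IH|g IHg h IHh|g IHg h IHh|g IHg h IHh|k g IH|k g IH] //=;
  try (by move=> [/IHg ? /IHh ?]); try exact: IH.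
by move=> [/(consts_in_term_mono H) ? /(consts_in_term_mono H) ?].
Qed.

Definition mC (C : seq V) : V -> Prop := fun v => v \in C.

Lemma eval_span C e L t : consts_in_term (mC C) t -> {subset fv_term t <= L} ->
  spanl (map e L ++ C) (eval_term e t).
Proof.
elim: t => [k|v||t IHt u IHu|t IHt|a t IHt] /=.
- move=> _ H; apply: spanl_mem; rewrite mem_cat map_f //; apply: H; exact: mem_head.
- by move=> Hv _; apply: spanl_mem; rewrite mem_cat Hv orbT.
- by move=> _ _; apply: spanl0.
- move=> [Ht Hu] H; apply: spanlD; [apply: IHt|apply: IHu] => // m Hm; apply: H;
  by rewrite mem_cat Hm ?orbT.
- by move=> Ht H; apply: spanlN; apply: IHt.
- by move=> Ht H; apply: spanlZ; apply: IHt.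
Qed.

Definition Rel C e e' (L : seq nat) := forall t, consts_in_term (mC C) t ->
  {subset fv_term t <= L} -> (eval_term e t = 0 <-> eval_term e' t = 0).

Definition NT C e (L : seq nat) x := forall t, consts_in_term (mC C) t ->
  {subset fv_term t <= L} -> eval_term e t <> x.

Lemma NT_comb C e L x a t : NT C e L x -> consts_in_term (mC C) t ->
  {subset fv_term t <= L} ->
  (a *: x + eval_term e t = 0 <-> a = 0 /\ eval_term e t = 0).
Proof.
move=> HN Hc Hf; split; last by move=> [-> ->]; rewrite scale0r addr0.
move=> H; have [a0|an0] := eqVneq a 0.
  by move: H; rewrite a0 scale0r add0r.
exfalso; apply: (HN (Tscale (- a^-1) t)) => //=.
have Hax : a *: x = - eval_term e t by apply/eqP; rewrite -addr_eq0; apply/eqP.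
by rewrite scaleNr -scalerN -Hax scalerA mulVf // scale1r.
Qed.

Lemma core C e e' L n x x' : Rel C e e' L ->
  ((exists t0, [/\ consts_in_term (mC C) t0, {subset fv_term t0 <= L},
       eval_term e t0 = x & eval_term e' t0 = x'])
   \/ (NT C e L x /\ NT C e' L x')) ->
  Rel C (upd e n x) (upd e' n x') (n :: L).
Proof.
move=> HR Hcase t Hc Hf; rewrite !eval_decomp.
have Hsc := consts_sub0 n Hc.
have Hsf : {subset fv_term (sub0 n t) <= L}.
  move=> m /fv_sub0 /andP [/Hf]; rewrite in_cons => /orP [/eqP ->|//].
  by rewrite eqxx.
case: Hcase => [[t0 [H0c H0f Hx Hx']]|[Hn Hn']].
  have := HR (Tadd (Tscale (coef n t) t0) (sub0 n t)); rewrite /= Hx Hx'; apply => //.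
  by move=> m; rewrite mem_cat => /orP [/H0f|/Hsf].
rewrite (NT_comb _ Hn Hsc Hsf) (NT_comb _ Hn' Hsc Hsf).
by rewrite (HR _ Hsc Hsf).
Qed.

Fixpoint qc (f : formula F V) : nat :=
  match f with
  | Fequ _ _ | Ffalse => 0
  | Fnot g => qc g
  | Fand g h | For g h | Fimp g h => qc g + qc h
  | Fforall _ g | Fexists _ g => (qc g).+1
  end.

Variables (W : V -> Prop) (sW : seq V) (C B : seq V).
Hypothesis HW : forall x, W x <-> spanl sW x.
Hypothesis HC : forall c, c \in C -> W c.
Hypothesis HB : forall b, b \in B -> W b.
Hypothesis HI : indep_mod C B.
Hypothesis Hinf : infinite_dim V.

Lemma ext_back e e' L n : Rel C e e' L -> (forall m, m \in L -> W (e m)) ->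
  (size L < size B)%N ->
  forall x', exists x, W x /\ Rel C (upd e n x) (upd e' n x') (n :: L).
Proof.
move=> HR HeW Hsz x'.
case: (classic (exists t0, [/\ consts_in_term (mC C) t0, {subset fv_term t0 <= L}
   & eval_term e' t0 = x'])) => [[t0 [H0c H0f H0]]|Hno].
  exists (eval_term e t0); split.
    apply/HW; apply: (spanl_trans (eval_span e H0c H0f)) => z.
    rewrite mem_cat => /orP [/mapP [m Hm ->]|Hz]; apply/HW; [exact: HeW|exact: HC].
  by apply: core => //; left; exists t0.
have [x [Wx Hx]] : exists x, W x /\ ~ spanl (map e L ++ C) x.
  by apply: (@room B C (map e L) W HI HB); rewrite size_map.
exists x; split => //; apply: core => //; right; split.
  by move=> t Hc Hf Ht; apply: Hx; rewrite -Ht; apply: eval_span.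
by move=> t Hc Hf Ht; apply: Hno; exists t.
Qed.

Lemma ext_forth e e' L n : Rel C e e' L ->
  forall x, exists x', Rel C (upd e n x) (upd e' n x') (n :: L).
Proof.
move=> HR x.
case: (classic (exists t0, [/\ consts_in_term (mC C) t0, {subset fv_term t0 <= L}
   & eval_term e t0 = x])) => [[t0 [H0c H0f H0]]|Hno].
  by exists (eval_term e' t0); apply: core => //; left; exists t0.
have [x' Hx'] := Hinf (map e' L ++ C).
exists x'; apply: core => //; right; split.
  by move=> t Hc Hf Ht; apply: Hno; exists t.
by move=> t Hc Hf Ht; apply: Hx'; apply: spanl_span_of; rewrite -Ht; apply: eval_span.
Qed.

Lemma transfer (f : formula F V) : forall e e' L,
  consts_in (mC C) f -> {subset fv f <= L} -> (forall m, m \in L -> W (e m)) ->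
  Rel C e e' L -> (size L + qc f <= size B)%N ->
  (holds W e f <-> holds (fun _ => True) e' f).
Proof.
elim: f => [t u| |g IH|g IHg h IHh|g IHg h IHh|g IHg h IHh|k g IH|k g IH]
  e e' L /=.
- move=> [Ht Hu] Hf _ HR _.
  have := HR (Tadd t (Topp u)) (conj Ht Hu) Hf; rewrite /=.
  have E : forall a b : V, a - b = 0 <-> a = b.
    move=> a b; split => [H|->]; last exact: subrr.
    by apply/eqP; rewrite -subr_eq0; apply/eqP.
  by rewrite !E.
- by [].
- by move=> Hc Hf HeW HR Hs; rewrite (IH e e' L).
- move=> [Hcg Hch] Hf HeW HR Hs.
  rewrite (IHg e e' L) ?(IHh e e' L) //; try (by move=> m Hm; apply: Hf; rewrite mem_cat Hm ?orbT);
  apply: leq_trans Hs; rewrite leq_add2l ?leq_addr ?leq_addl //.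
- move=> [Hcg Hch] Hf HeW HR Hs.
  rewrite (IHg e e' L) ?(IHh e e' L) //; try (by move=> m Hm; apply: Hf; rewrite mem_cat Hm ?orbT);
  apply: leq_trans Hs; rewrite leq_add2l ?leq_addr ?leq_addl //.
- move=> [Hcg Hch] Hf HeW HR Hs.
  rewrite (IHg e e' L) ?(IHh e e' L) //; try (by move=> m Hm; apply: Hf; rewrite mem_cat Hm ?orbT);
  apply: leq_trans Hs; rewrite leq_add2l ?leq_addr ?leq_addl //.
- move=> Hc Hf HeW HR Hs.
  have Hf' : {subset fv g <= k :: L}.
    move=> m Hm; rewrite in_cons; case: eqVneq => //= Hmk; apply: Hf.
    by rewrite mem_filter Hmk.
  have HeW' : forall x, W x -> forall m, m \in k :: L -> W (upd e k x m).
    by move=> x Wx m; rewrite in_cons /upd; case: eqVneq => //= _; apply: HeW.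
  have Hs' : (size (k :: L) + qc g <= size B)%N by rewrite /= addSnnS.
  have HsL : (size L < size B)%N by apply: leq_trans Hs; rewrite addnS ltnS leq_addr.
  split.
    move=> H x' _; have [x [Wx Hx]] := @ext_back e e' L k HR HeW HsL x'.
    by apply/(IH _ _ (k :: L) Hc Hf' (HeW' x Wx) Hx Hs'); apply: H.
  move=> H x Wx; have [x' Hx'] := ext_forth k HR x.
  by apply/(IH _ _ (k :: L) Hc Hf' (HeW' x Wx) Hx' Hs'); apply: H.
- move=> Hc Hf HeW HR Hs.
  have Hf' : {subset fv g <= k :: L}.
    move=> m Hm; rewrite in_cons; case: eqVneq => //= Hmk; apply: Hf.
    by rewrite mem_filter Hmk.
  have HeW' : forall x, W x -> forall m, m \in k :: L -> W (upd e k x m).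
    by move=> x Wx m; rewrite in_cons /upd; case: eqVneq => //= _; apply: HeW.
  have Hs' : (size (k :: L) + qc g <= size B)%N by rewrite /= addSnnS.
  have HsL : (size L < size B)%N by apply: leq_trans Hs; rewrite addnS ltnS leq_addr.
  split.
    move=> [x [Wx H]]; have [x' Hx'] := ext_forth k HR x.
    exists x'; split => //.
    by apply/(IH _ _ (k :: L) Hc Hf' (HeW' x Wx) Hx' Hs').
  move=> [x' [_ H]]; have [x [Wx Hx]] := @ext_back e e' L k HR HeW HsL x'.
  exists x; split => //.
  by apply/(IH _ _ (k :: L) Hc Hf' (HeW' x Wx) Hx Hs').
Qed.

End Aux.

Section Main.
Variables (F : fieldType) (V : lmodType F).

Fixpoint cterm (t : term F V) : seq V :=
  match t with
  | Tvar _ | Tzero => [::]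
  | Tconst v => [:: v]
  | Tadd t u => cterm t ++ cterm u
  | Topp t => cterm t
  | Tscale _ t => cterm t
  end.

Fixpoint cform (f : formula F V) : seq V :=
  match f with
  | Fequ t u => cterm t ++ cterm u
  | Ffalse => [::]
  | Fnot g => cform g
  | Fand g h | For g h | Fimp g h => cform g ++ cform h
  | Fforall _ g | Fexists _ g => cform g
  end.

Lemma cterm_in (P : V -> Prop) t : (forall v, v \in cterm t -> P v) -> consts_in_term P t.
Proof.
elim: t => [k|v||t IHt u IHu|t IHt|a t IHt] //=.
- by move=> H; apply: H; rewrite mem_head.
- move=> H; split; [apply: IHt|apply: IHu] => v Hv; apply: H; by rewrite mem_cat Hv ?orbT.
Qed.

Lemma cform_in (P : V -> Prop) f : (forall v, v \in cform f -> P v) -> consts_in P f.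
Proof.
elim: f => [t u| |g IH|g IHg h IHh|g IHg h IHh|g IHg h IHh|k g IH|k g IH] //=;
  try (move=> H; split; [apply: IHg|apply: IHh] => v Hv; apply: H; by rewrite mem_cat Hv ?orbT).
- move=> H; split; apply: cterm_in => v Hv; apply: H; by rewrite mem_cat Hv ?orbT.
Qed.

Lemma finsub_spanl (W : FinSub V) : exists s, forall x, proj1_sig W x <-> spanl s x.
Proof.
case: W => W [s Hs] /=; exists s => x; rewrite Hs; split;
  [apply: span_of_spanl|apply: spanl_span_of].
Qed.

Definition mkFS (s : seq V) : FinSub V :=
  exist _ (span_of s) (ex_intro _ s (fun x => iff_refl _)).

Lemma join (W1 W2 : FinSub V) : exists W : FinSub V, fs_le W1 W /\ fs_le W2 W.
Proof.
have [s1 H1] := finsub_spanl W1; have [s2 H2] := finsub_spanl W2.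
exists (mkFS (s1 ++ s2)); split => x /= Hx; apply: spanl_span_of.
  by move/H1: Hx; apply: spanl_sub => z Hz; rewrite mem_cat Hz.
by move/H2: Hx; apply: spanl_sub => z Hz; rewrite mem_cat Hz orbT.
Qed.

Lemma key (Hinf : infinite_dim V) (th : formula F V) : sentence th ->
  exists W0 : FinSub V, forall W : FinSub V, fs_le W0 W ->
   consts_in (proj1_sig W) th /\
   (holds (proj1_sig W) (fun _ => 0) th <-> holds (fun _ => True) (fun _ => 0) th).
Proof.
move=> Hsent.
set C := cform th.
have [B [HsB HI]] := mk_indep Hinf (qc th) C.
exists (mkFS (C ++ B)) => W HW0.
have [sW HW] := finsub_spanl W.
have HC : forall c, c \in C -> proj1_sig W c.
  by move=> c Hc; apply: HW0; apply: spanl_span_of; apply: spanl_mem; rewrite mem_cat Hc.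
have HB : forall b, b \in B -> proj1_sig W b.
  by move=> c Hc; apply: HW0; apply: spanl_span_of; apply: spanl_mem; rewrite mem_cat Hc orbT.
split; first exact: cform_in.
apply: (transfer HW HC HB HI Hinf (L := [::])).
- exact: cform_in.
- by rewrite /sentence in Hsent; rewrite Hsent.
- by [].
- by [].
- by rewrite HsB.
Qed.

End Main.

Theorem mainTheorem11 (F : fieldType) (V : lmodType F) :
  infinite_dim V ->
  is_lim (@fs_le F V) (fun W : FinSub V => Th (proj1_sig W)) (ThV (V:=V)).
Proof.
move=> Hinf.
have ThVtriv : forall th : formula F V, consts_in (fun _ => True) th.
  by move=> th; apply: cform_in.
split => th; split.
- move=> Hls.
  have [j [_ [Hs _]]] := Hls (mkFS [::]).
  have [W0 HW0] := key Hinf Hs.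
  have [j' [Hj' [_ [_ Hh]]]] := Hls W0.
  split => //; split; first exact: ThVtriv.
  by apply/(HW0 j' Hj').2.
- move=> [Hs [_ Hh]] i.
  have [W0 HW0] := key Hinf Hs.
  have [j [Hij H0j]] := join i W0.
  exists j; split => //; split => //; split; first exact: (HW0 j H0j).1.
  by apply/(HW0 j H0j).2.
- move=> [i Hli].
  have [Hs _] := Hli i (fun x H => H).
  have [W0 HW0] := key Hinf Hs.
  have [j [Hij H0j]] := join i W0.
  have [_ [_ Hh]] := Hli j Hij.
  split => //; split; first exact: ThVtriv.
  by apply/(HW0 j H0j).2.
- move=> [Hs [_ Hh]].
  have [W0 HW0] := key Hinf Hs.
  exists W0 => j H0j; split => //; split; first exact: (HW0 j H0j).1.
  by apply/(HW0 j H0j).2.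
Qed.
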